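(* Let $m \ge 1$ and $n \ge 2m$ be integers. Then for every real $r$ with $|r|<1$, $$\int_{-1}^1 \frac{T_n(s)(1-s^2)^{m-\frac{1}{2}}}{s-r}\,ds = \pi(-1)^{m+1}\left(\frac{1}{2}\right)^{2m-1}\sum_{j=0}^{2m-1}(-1)^j\binom{2m-1}{j}T_{n+1-2m+2j}(r),$$ where the integral is a Cauchy principal-value integral.
   Context: $T_k$ denotes the Tchebyshev polynomial of the first kind, $T_k(s)=\cos(k\cos^{-1}s)$, $k=0,1,2,\dots$. The integral over $(-1,1)$ with the singular point $s=r\in(-1,1)$ is understood in the Cauchy principal-value sense. $\binom{a}{j}=\frac{a!}{j!(a-j)!}$. *)

(* Defs.v *)
From Stdlib Require Import Reals.
From Coquelicot Require Import Coquelicot.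
Open Scope R_scope.

Definition chebT (k : nat) (s : R) : R := cos (INR k * acos s).

Definition is_PV_integral (f : R -> R) (a b r v : R) : Prop :=
  (exists delta : R, 0 < delta /\
     forall eps : R, 0 < eps < delta ->
       ex_RInt f a (r - eps) /\ ex_RInt f (r + eps) b) /\
  filterlim (fun eps : R => RInt f a (r - eps) + RInt f (r + eps) b)
            (at_right 0) (locally v).

(* Main.v *)
Require Import Defs.
From Stdlib Require Import Reals Lra Lia.
From Coquelicot Require Import Coquelicot.
Open Scope R_scope.

Definition Good (r : R) (g : R -> R) (v : R) : Prop := exists (H : R -> R) (b : R) (S : R -> R),
 (forall t, cos t <> r -> is_derive H t (g t)) /\
 (forall t, cos t <> r -> H t = b * ln ((cos t - r)^2) + S t) /\
 continuous S (acos r) /\ H PI - H 0 = v.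

Lemma Good_ext r g g' v : (forall t, cos t <> r -> g t = g' t) -> Good r g v -> Good r g' v.
Proof.
intros E [H [b [S [H1 [H2 [H3 H4]]]]]]. exists H, b, S; refine (conj _ (conj _ (conj _ _))); auto.
intros t Ht. rewrite <- E by auto. auto.
Qed.

Lemma Good_lin r g1 g2 v1 v2 a c : Good r g1 v1 -> Good r g2 v2 ->
  Good r (fun t => a * g1 t + c * g2 t) (a * v1 + c * v2).
Proof.
intros [H [b [S [H1 [H2 [H3 H4]]]]]] [H' [b' [S' [H1' [H2' [H3' H4']]]]]].
exists (fun t => a * H t + c * H' t), (a * b + c * b'), (fun t => a * S t + c * S' t).
refine (conj _ (conj _ (conj _ _))).
- intros t Ht. exact (is_derive_plus _ _ _ _ _ (is_derive_scal _ _ a _ (H1 t Ht)) (is_derive_scal _ _ c _ (H1' t Ht))).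
- intros t Ht. cbv beta. rewrite (H2 t Ht), (H2' t Ht). ring.
- apply continuity_pt_filterlim. apply continuity_pt_plus; apply continuity_pt_scal;
  apply continuity_pt_filterlim; auto.
- rewrite <- H4, <- H4'. ring.
Qed.

Lemma Good_one r : Rabs r < 1 -> Good r (fun _ => 1) PI.
Proof.
intros hr. exists (fun t => t), 0, (fun t => t). refine (conj _ (conj _ (conj _ _))).
- intros t _. auto_derive; auto.
- intros t _. ring.
- apply continuity_pt_filterlim. apply continuity_pt_id.
- ring.
Qed.

Lemma sin_INR_PI k : sin (INR k * PI) = 0.
Proof. apply sin_eq_0_1. exists (Z.of_nat k). rewrite <- INR_IZR_INZ. auto. Qed.

Lemma Good_cos_gen r k : k <> 0 -> sin (k * PI) = 0 -> Good r (fun t => cos (k * t)) 0.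
Proof.
intros HN HS.
exists (fun t => sin (k * t) / k), 0, (fun t => sin (k * t) / k).
refine (conj _ (conj _ (conj _ _))).
- intros t _. auto_derive; auto. field; auto.
- intros t _. ring.
- apply continuity_pt_filterlim. apply continuity_pt_div; [|apply continuity_pt_const; intros ? ?; auto|auto].
  apply (continuity_pt_comp (fun t => k * t) sin). apply continuity_pt_scal. apply continuity_pt_id.
  apply continuity_sin.
- rewrite HS, Rmult_0_r, sin_0. field; auto.
Qed.

Lemma Good_cos r N : Good r (fun t => cos (INR (S N) * t)) 0.
Proof. apply Good_cos_gen. apply not_0_INR; lia. apply sin_INR_PI. Qed.

Lemma cos_diff t p : cos t - cos p = -2 * sin ((t + p) / 2) * sin ((t - p) / 2).
Proof.
replace t with ((t + p)/2 + (t - p)/2) at 1 by field.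
replace p with ((t + p)/2 - (t - p)/2) at 3 by field.
rewrite cos_plus, cos_minus. ring.
Qed.

Lemma phi_facts r : Rabs r < 1 -> cos (acos r) = r /\ 0 < acos r < PI /\ 0 < sin (acos r).
Proof.
intros hr. apply Rabs_def2 in hr.
assert (h1 : 0 < acos r < PI) by (apply acos_bound_lt; lra).
split. apply cos_acos; lra. split. auto. apply sin_gt_0; lra.
Qed.

Definition H0 r t := (ln (sin ((t + acos r)/2) ^ 2) - ln (sin ((t - acos r)/2) ^ 2)) / (2 * sin (acos r)).

Lemma Good_inv r : Rabs r < 1 -> Good r (fun t => 1 / (cos t - r)) 0.
Proof.
intros hr. destruct (phi_facts r hr) as [hc [hp hs]].
set (p := acos r) in *.
exists (H0 r), (-1 / (2 * sin p)), (fun t => (2 * ln (sin ((t + p)/2) ^ 2) + ln 4) / (2 * sin p)).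
refine (conj _ (conj _ (conj _ _))).
- intros t Ht.
  assert (E := cos_diff t p). rewrite hc in E.
  assert (Ha : sin ((t + p)/2) <> 0). { intro Z. rewrite Z in E. apply Ht. lra. }
  assert (Hb : sin ((t - p)/2) <> 0). { intro Z. rewrite Z in E. apply Ht. lra. }
  unfold H0. fold p. auto_derive.
  + split. apply Rsqr_pos_lt in Ha. unfold Rsqr in Ha. lra.
    split; [|tauto]. apply Rsqr_pos_lt in Hb. unfold Rsqr in Hb. 
    replace ((t + - p) * / 2) with ((t - p)/2) by field. lra.
  + replace ((t + p) * / 2) with ((t + p)/2) by field.
    replace ((t + - p) * / 2) with ((t - p)/2) by field.
    rewrite E.
    assert (Sp : sin p = sin((t+p)/2) * cos((t-p)/2) - cos((t+p)/2) * sin((t-p)/2)).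
    { rewrite <- sin_minus. f_equal. field. }
    assert (Sp' : sin((t+p)/2) * cos((t-p)/2) - cos((t+p)/2) * sin((t-p)/2) <> 0) by lra.
    rewrite Sp. field. auto.
- intros t Ht.
  assert (E := cos_diff t p). rewrite hc in E.
  assert (Ha : sin ((t + p)/2) <> 0). { intro Z. rewrite Z in E. apply Ht. lra. }
  assert (Hb : sin ((t - p)/2) <> 0). { intro Z. rewrite Z in E. apply Ht. lra. }
  assert (Pa : 0 < sin ((t + p)/2) ^ 2) by (apply pow2_gt_0; auto).
  assert (Pb : 0 < sin ((t - p)/2) ^ 2) by (apply pow2_gt_0; auto).
  replace ((cos t - r) ^ 2) with (4 * (sin ((t + p)/2) ^ 2 * sin ((t - p)/2) ^ 2)) by (rewrite E; ring).
  rewrite ln_mult by (try apply Rmult_lt_0_compat; lra).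
  rewrite ln_mult by lra.
  unfold H0. fold p. field. lra.
- fold p. apply continuity_pt_filterlim. apply derivable_continuous_pt. apply ex_derive_Reals_0. auto_derive.
  replace ((p + p) * / 2) with p by field. idtac.
  apply Rmult_lt_0_compat; lra.
- unfold H0. fold p.
  replace ((PI + p) / 2) with (PI - (PI - p)/2) by field. rewrite sin_PI_x.
  replace ((0 - p) / 2) with (- ((0 + p)/2)) by field. rewrite sin_neg.
  replace ((- sin ((0 + p) / 2)) ^ 2) with (sin ((0 + p) / 2) ^ 2) by ring. unfold Rminus. rewrite !Rplus_opp_r. unfold Rdiv. ring.
Qed.

Lemma Good_val r g v v' : Good r g v -> v = v' -> Good r g v'.
Proof. intros H E; subst; auto. Qed.

Lemma cos_rec x y : cos (x + y) = 2 * cos x * cos y - cos (x - y).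
Proof. rewrite cos_plus, cos_minus. ring. Qed.
Lemma sin_rec x y : sin (x + y) = 2 * sin x * cos y - sin (x - y).
Proof. rewrite sin_plus, sin_minus. ring. Qed.

Lemma Good_N r : Rabs r < 1 -> forall N,
  Good r (fun t => cos (INR N * t) / (cos t - r)) (PI * sin (INR N * acos r) / sin (acos r)).
Proof.
intros hr. destruct (phi_facts r hr) as [hc [hp hs]].
assert (forall N, Good r (fun t => cos (INR N * t) / (cos t - r)) (PI * sin (INR N * acos r) / sin (acos r)) /\
  Good r (fun t => cos (INR (S N) * t) / (cos t - r)) (PI * sin (INR (S N) * acos r) / sin (acos r))).
{ induction N as [|N [IH1 IH2]].
  - split.
    + apply Good_val with 0. apply Good_ext with (fun t => 1 / (cos t - r)).
      intros t Ht. simpl. rewrite Rmult_0_l, cos_0. auto. apply Good_inv; auto.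
      simpl. rewrite Rmult_0_l, sin_0. field. lra.
    + apply Good_val with (1 * PI + r * 0).
      apply Good_ext with (fun t => 1 * 1 + r * (1 / (cos t - r))).
      intros t Ht. simpl. rewrite Rmult_1_l. replace (1 * t) with t by ring. field. intro Z; apply Ht; lra.
      apply Good_lin. apply Good_one; auto. apply Good_inv; auto.
      simpl. rewrite (Rmult_1_l (acos r)). field. lra.
  - split; auto.
    apply Good_val with (2 * 0 + 1 * (2 * r * (PI * sin (INR (S N) * acos r) / sin (acos r)) + (-1) * (PI * sin (INR N * acos r) / sin (acos r)))).
    apply Good_ext with (fun t => 2 * cos (INR (S N) * t) + 1 * (2 * r * (cos (INR (S N) * t) / (cos t - r)) + (-1) * (cos (INR N * t) / (cos t - r)))).
    + intros t Ht. 
      replace (INR (S (S N)) * t) with (INR (S N) * t + t) by (rewrite !S_INR; ring).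
      rewrite cos_rec.
      replace (INR (S N) * t - t) with (INR N * t) by (rewrite !S_INR; ring).
      field. intro Z; apply Ht; lra.
    + apply Good_lin. apply Good_cos. apply Good_lin; auto.
    + replace (INR (S (S N)) * acos r) with (INR (S N) * acos r + acos r) by (rewrite !S_INR; ring).
      rewrite sin_rec.
      replace (INR (S N) * acos r - acos r) with (INR N * acos r) by (rewrite !S_INR; ring).
      rewrite hc. field. lra. }
intros N; apply H.
Qed.

Definition gNk r N k t := cos (INR N * t) * sin t ^ (2 * k) / (cos t - r).

Lemma Good_Nk r : Rabs r < 1 -> forall k N, (2 * k <= N)%nat ->
  Good r (gNk r N k) (PI * sin (INR N * acos r) * sin (acos r) ^ (2 * k) / sin (acos r)).
Proof.
intros hr. destruct (phi_facts r hr) as [hc [hp hs]].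
induction k as [|k IH]; intros N HN.
- apply Good_val with (PI * sin (INR N * acos r) / sin (acos r)).
  apply Good_ext with (fun t => cos (INR N * t) / (cos t - r)).
  intros t Ht. unfold gNk. simpl. field. intro Z; apply Ht; lra.
  apply Good_N; auto. simpl. field. lra.
- destruct N as [|[|M]]; [lia|lia|].
  set (X := INR (S (S M))).
  assert (E1 : INR (S (S (S (S M)))) = X + 2) by (unfold X; rewrite !S_INR; ring).
  assert (E2 : INR M = X - 2) by (unfold X; rewrite !S_INR; ring).
  assert (G1 := IH (S (S M)) ltac:(lia)).
  assert (G2 := IH (S (S (S (S M)))) ltac:(lia)).
  assert (G3 := IH M ltac:(lia)).
  rewrite E1 in G2. rewrite E2 in G3. fold X in G1.
  eapply Good_val.
  eapply Good_ext; [| apply (Good_lin _ _ _ _ _ (1/2) 1 G1 (Good_lin _ _ _ _ _ (-1/4) (-1/4) G2 G3))].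
  + intros t Ht. unfold gNk. fold X.
    replace (2 * S k)%nat with (2 * k + 2)%nat by lia. rewrite pow_add.
    replace ((X + 2) * t) with (X * t + 2 * t) by ring.
    replace ((X - 2) * t) with (X * t - 2 * t) by ring.
    rewrite E1, E2. replace ((X + 2) * t) with (X * t + 2 * t) by ring. replace ((X - 2) * t) with (X * t - 2 * t) by ring. rewrite (cos_rec (X * t) (2 * t)). rewrite cos_2a_sin.
    field. intro Z; apply Ht; lra.
  + replace ((X + 2) * acos r) with (X * acos r + 2 * acos r) by ring.
    replace ((X - 2) * acos r) with (X * acos r - 2 * acos r) by ring.
    rewrite (sin_rec (X * acos r) (2 * acos r)). rewrite cos_2a_sin.
    replace (2 * S k)%nat with (2 * k + 2)%nat by lia. rewrite pow_add.
    field. lra.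
Qed.

Lemma Cn0 n : Binomial.C n 0 = 1.
Proof. unfold Binomial.C. rewrite Nat.sub_0_r. change (INR (Factorial.fact 0)) with 1. field. apply INR_fact_neq_0. Qed.
Lemma Cnn n : Binomial.C n n = 1.
Proof. unfold Binomial.C. rewrite Nat.sub_diag. change (INR (Factorial.fact 0)) with 1. field. apply INR_fact_neq_0. Qed.

Definition Asum (p : R) (M : nat) (x : R) :=
  sum_f_R0 (fun j => (-1) ^ j * Binomial.C M j * cos (x + 2 * INR j * p)) M.

Lemma Asum_step p M x : Asum p (S M) x = Asum p M x - Asum p M (x + 2 * p).
Proof.
unfold Asum. destruct M as [|M'].
- simpl. rewrite Cn0. replace (Binomial.C 1 1) with 1 by (symmetry; apply (Cnn 1)).
  rewrite Cn0. simpl. replace (x + 2 * 1 * p) with (x + 2 * p + 2 * 0 * p) by ring.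
  replace (x + 2 * 0 * p) with x by ring. ring.
- rewrite (decomp_sum _ (S (S M'))) by lia. simpl Init.Nat.pred.
  rewrite tech5.
  rewrite (decomp_sum _ (S M')) by lia. simpl Init.Nat.pred.
  rewrite (tech5 _ M').
  rewrite (sum_eq (fun i => (-1) ^ S i * Binomial.C (S (S M')) (S i) * cos (x + 2 * INR (S i) * p))
     (fun i => (-1) ^ S i * Binomial.C (S M') (S i) * cos (x + 2 * INR (S i) * p) -
               (-1) ^ i * Binomial.C (S M') i * cos (x + 2 * p + 2 * INR i * p))).
  + rewrite minus_sum. rewrite !Cn0, !Cnn. simpl pow.
    replace (x + 2 * INR 0 * p) with x by (simpl; ring).
    replace (x + 2 * INR (S (S M')) * p) with (x + 2 * p + 2 * INR (S M') * p) by (rewrite !S_INR; ring).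
    ring.
  + intros i Hi. rewrite <- pascal by lia.
    replace (x + 2 * INR (S i) * p) with (x + 2 * p + 2 * INR i * p) by (rewrite S_INR; ring).
    simpl pow. ring.
Qed.

Lemma Asum_closed p M x : Asum p M x = (2 * sin p) ^ M * cos (x + INR M * p - INR M * PI / 2).
Proof.
revert x. induction M as [|M IH]; intros x.
- unfold Asum. simpl. rewrite Cn0. f_equal. ring. f_equal. field.
- rewrite Asum_step, !IH.
  set (y := x + INR M * p - INR M * PI / 2).
  replace (x + 2 * p + INR M * p - INR M * PI / 2) with (y + 2 * p) by (unfold y; field).
  replace (x + INR (S M) * p - INR (S M) * PI / 2) with ((y + p) - PI / 2) by (unfold y; rewrite S_INR; field).
  rewrite cos_minus, cos_PI2, sin_PI2.
  replace (y + 2 * p) with ((y + p) + p) by ring.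
  replace y with ((y + p) - p) at 1 by ring.
  rewrite cos_plus, cos_minus. simpl pow. ring.
Qed.

Lemma sin_shift_k z k : sin (z - INR k * PI) = (-1) ^ k * sin z.
Proof.
induction k as [|k IH].
- simpl. replace (z - 0 * PI) with z by ring. ring.
- rewrite S_INR. replace (z - (INR k + 1) * PI) with ((z - INR k * PI) - PI) by ring.
  rewrite sin_minus, cos_PI, sin_PI, IH. simpl. ring.
Qed.

Fixpoint Tp (n : nat) (s : R) : R :=
  match n with
  | O => 1
  | S O => s
  | S ((S k) as n') => 2 * s * Tp n' s - Tp k s
  end.

Lemma Tp_cos n y : Tp n (cos y) = cos (INR n * y).
Proof.
assert (forall n, Tp n (cos y) = cos (INR n * y) /\ Tp (S n) (cos y) = cos (INR (S n) * y)).
{ induction n0 as [|k [IH1 IH2]].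
  - simpl. rewrite Rmult_0_l, cos_0, Rmult_1_l. auto.
  - split; auto. change (Tp (S (S k)) (cos y)) with (2 * cos y * Tp (S k) (cos y) - Tp k (cos y)).
    rewrite IH1, IH2.
    replace (INR (S (S k)) * y) with (INR (S k) * y + y) by (rewrite !S_INR; ring).
    rewrite cos_rec. replace (INR (S k) * y - y) with (INR k * y) by (rewrite !S_INR; ring). ring. }
apply H.
Qed.

Lemma Tp_cont n s : continuity_pt (Tp n) s.
Proof.
assert (forall n, continuity_pt (Tp n) s /\ continuity_pt (Tp (S n)) s).
{ induction n0 as [|k [IH1 IH2]].
  - split. apply continuity_pt_const. intros ? ?; auto. apply continuity_pt_id.
  - split; auto. change (continuity_pt (fun s => 2 * s * Tp (S k) s - Tp k s) s).
    apply continuity_pt_minus; auto. apply continuity_pt_mult; auto.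
    apply continuity_pt_scal. apply continuity_pt_id. }
apply H.
Qed.

Lemma chebT_Tp n s : -1 <= s <= 1 -> cos (INR n * acos s) = Tp n s.
Proof. intros hs. rewrite <- Tp_cos. rewrite cos_acos; auto. Qed.

Definition ftil n m r s := Tp n s * ((1 - s ^ 2) ^ (m - 1) * sqrt (1 - s ^ 2)) / (s - r).

Lemma ftil_cont n m r s : -1 <= s <= 1 -> s <> r -> continuous (ftil n m r) s.
Proof.
intros hs hr. apply continuity_pt_filterlim. unfold ftil.
apply continuity_pt_div.
- apply continuity_pt_mult. apply Tp_cont. apply continuity_pt_mult.
  + apply derivable_continuous_pt. apply ex_derive_Reals_0. auto_derive. auto.
  + apply (continuity_pt_comp (fun s => 1 - s ^ 2) sqrt).
    apply derivable_continuous_pt. apply ex_derive_Reals_0. auto_derive. auto.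
    apply continuity_pt_sqrt. nra.
- apply derivable_continuous_pt. apply ex_derive_Reals_0. auto_derive. auto.
- lra.
Qed.

Lemma gNk_cont r n m y : cos y <> r -> continuous (gNk r n m) y.
Proof.
intros hy. apply continuity_pt_filterlim. apply derivable_continuous_pt. apply ex_derive_Reals_0.
unfold gNk. auto_derive. lra.
Qed.

Lemma ftil_gNk n m r y : (1 <= m)%nat -> 0 <= y <= PI -> cos y <> r ->
  - sin y * ftil n m r (cos y) = - gNk r n m y.
Proof.
intros hm hy hc. unfold ftil, gNk. rewrite Tp_cos.
assert (E : 1 - cos y ^ 2 = sin y ^ 2).
{ assert (Z := sin2_cos2 y). unfold Rsqr in Z. simpl. lra. }
rewrite E. rewrite sqrt_pow2 by (apply sin_ge_0; lra).
destruct m as [|m']; [lia|].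
replace (S m' - 1)%nat with m' by lia.
rewrite <- pow_mult.
replace (2 * S m')%nat with (2 * m' + 1 + 1)%nat by lia. rewrite !pow_add.
field. lra.
Qed.

Lemma piece r n m (H : R -> R) a b : (1 <= m)%nat ->
  0 <= a -> a <= b -> b <= PI ->
  (forall y, a <= y <= b -> cos y <> r) ->
  (forall s, cos b <= s <= cos a -> s <> r) ->
  (forall y, cos y <> r -> is_derive H y (gNk r n m y)) ->
  is_RInt (ftil n m r) (cos b) (cos a) (H b - H a).
Proof.
intros hm ha hab hb hy hs hd.
assert (hcb : cos b <= cos a).
{ destruct (Req_dec a b) as [e|e]. subst; lra. apply Rlt_le, cos_decreasing_1; lra. }
assert (Cb := COS_bound b). assert (Ca := COS_bound a).
assert (C1 := is_RInt_comp (ftil n m r) cos (fun y => - sin y) b a).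
rewrite Rmin_right, Rmax_left in C1 by lra.
assert (C1' : is_RInt (fun y : R => scal (- sin y) (ftil n m r (cos y))) b a (RInt (ftil n m r) (cos b) (cos a))).
{ apply C1.
  - intros x hx. apply ftil_cont. apply COS_bound. apply hy; lra.
  - intros x hx. split. auto_derive; auto. ring.
    apply continuity_pt_filterlim. apply derivable_continuous_pt. apply ex_derive_Reals_0. auto_derive. auto. }
clear C1.
assert (F := is_RInt_derive H (gNk r n m) a b).
rewrite Rmin_left, Rmax_right in F by lra.
assert (F' : is_RInt (gNk r n m) a b (minus (H b) (H a))).
{ apply F. intros x hx. apply hd, hy; lra. intros x hx. apply gNk_cont, hy; lra. }
clear F.
apply is_RInt_swap in F'. apply is_RInt_opp in F'.
assert (F2 : is_RInt (fun y => - sin y * ftil n m r (cos y)) b a (H b - H a)).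
{ apply is_RInt_ext with (fun y => opp (gNk r n m y)).
  rewrite Rmin_right, Rmax_left by lra. intros x hx.
  rewrite ftil_gNk; auto. lra. apply hy; lra.
  replace (H b - H a) with (opp (opp (minus (H b) (H a)))). exact F'.
  rewrite opp_opp. reflexivity. }
assert (C2 : is_RInt (fun y => - sin y * ftil n m r (cos y)) b a (RInt (ftil n m r) (cos b) (cos a))) by exact C1'.
apply (is_RInt_unique (V := R_CompleteNormedModule)) in F2.
apply (is_RInt_unique (V := R_CompleteNormedModule)) in C2.
assert (EX : ex_RInt (ftil n m r) (cos b) (cos a)).
{ apply (ex_RInt_continuous (V := R_CompleteNormedModule)). rewrite Rmin_left, Rmax_right by lra. intros z hz.
  apply ftil_cont. lra. apply hs; lra. }
apply (RInt_correct (V := R_CompleteNormedModule)) in EX. rewrite <- C2, F2 in EX. exact EX.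
Qed.

Lemma rhs_eq (m n : nat) (r : R) : (1 <= m)%nat -> (2 * m <= n)%nat -> Rabs r < 1 ->
  PI * (-1) ^ (m + 1) * (1 / 2) ^ (2 * m - 1) *
       sum_f_R0 (fun j : nat =>
         (-1) ^ j * Binomial.C (2 * m - 1) j * cos (INR (n + 1 - 2 * m + 2 * j) * acos r))
       (2 * m - 1)
  = PI * sin (INR n * acos r) * sin (acos r) ^ (2 * m) / sin (acos r).
Proof.
intros hm hn hr. destruct (phi_facts r hr) as [hc [hp hs]].
set (p := acos r) in *.
destruct m as [|m']; [lia|].
replace (2 * S m' - 1)%nat with (2 * m' + 1)%nat by lia.
rewrite (sum_eq _ (fun j => (-1) ^ j * Binomial.C (2 * m' + 1) j * cos (INR (n + 1 - 2 * S m') * p + 2 * INR j * p))).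
2: { intros i hi. f_equal. f_equal. rewrite plus_INR, mult_INR. simpl (INR 2). ring. }
change (sum_f_R0 _ _) with (Asum p (2 * m' + 1) (INR (n + 1 - 2 * S m') * p)).
rewrite Asum_closed.
assert (E1 : INR (n + 1 - 2 * S m') * p + INR (2 * m' + 1) * p - INR (2 * m' + 1) * PI / 2
   = (INR n * p - INR m' * PI) - PI / 2).
{ rewrite minus_INR by lia. rewrite !plus_INR, !mult_INR, S_INR. simpl (INR 2). rewrite S_INR. simpl (INR 0). field. }
rewrite E1. rewrite cos_minus, cos_PI2, sin_PI2, sin_shift_k.
replace (S m' + 1)%nat with (m' + 2)%nat by lia. rewrite pow_add.
replace (2 * S m')%nat with (2 * m' + 1 + 1)%nat by lia. rewrite (pow_add _ (2 * m' + 1) 1).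
rewrite Rpow_mult_distr.
assert (K : (1/2) ^ (2 * m' + 1) * 2 ^ (2 * m' + 1) = 1).
{ rewrite <- Rpow_mult_distr. replace (1 / 2 * 2) with 1 by field. apply pow1. }
assert (K2 : (-1) ^ m' * (-1) ^ m' = 1).
{ rewrite <- Rpow_mult_distr. replace (-1 * -1) with 1 by ring. apply pow1. }
simpl (_ ^ 2). simpl (_ ^ 1).
transitivity (PI * ((-1) ^ m' * (-1) ^ m') * ((1/2) ^ (2 * m' + 1) * 2 ^ (2 * m' + 1)) * sin p ^ (2 * m' + 1) * sin (INR n * p)).
- ring.
- rewrite K, K2. field. lra.
Qed.

Lemma cos_mono x y : 0 <= x -> x <= y -> y <= PI -> cos y <= cos x.
Proof.
intros. destruct (Req_dec x y) as [e|e]. subst; lra. apply Rlt_le, cos_decreasing_1; lra.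
Qed.

Theorem mainTheorem1 (m n : nat) (hm : (1 <= m)%nat) (hn : (2 * m <= n)%nat)
  (r : R) (hr : Rabs r < 1) :
  is_PV_integral
    (fun s : R => chebT n s * ((1 - s ^ 2) ^ (m - 1) * sqrt (1 - s ^ 2)) / (s - r))
    (-1) 1 r
    (PI * (-1) ^ (m + 1) * (1 / 2) ^ (2 * m - 1) *
       sum_f_R0 (fun j : nat =>
         (-1) ^ j * Binomial.C (2 * m - 1) j * chebT (n + 1 - 2 * m + 2 * j) r)
       (2 * m - 1)).
Proof.
unfold chebT at 2. rewrite (rhs_eq m n r hm hn hr).
destruct (phi_facts r hr) as [hc [hp hs]].
assert (hr' := hr). apply Rabs_def2 in hr'.
destruct (Good_Nk r hr m n hn) as [H [b [S [Hd [Hdec [Hcont Hval]]]]]].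
set (v := PI * sin (INR n * acos r) * sin (acos r) ^ (2 * m) / sin (acos r)) in *.
set (f := fun s : R => chebT n s * ((1 - s ^ 2) ^ (m - 1) * sqrt (1 - s ^ 2)) / (s - r)).
assert (Ef : forall s, -1 <= s <= 1 -> ftil n m r s = f s).
{ intros s hs'. unfold ftil, f, chebT. rewrite chebT_Tp; auto. }
set (d := Rmin (1 + r) (1 - r)).
assert (hd : 0 < d) by (unfold d; apply Rmin_case; lra).
assert (hd1 : d <= 1 + r) by apply Rmin_l.
assert (hd2 : d <= 1 - r) by apply Rmin_r.
assert (KEY : forall eps, 0 < eps < d ->
  ex_RInt f (-1) (r - eps) /\ ex_RInt f (r + eps) 1 /\
  RInt f (-1) (r - eps) + RInt f (r + eps) 1 = v + S (acos (r + eps)) - S (acos (r - eps))).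
{ intros eps he.
  set (t1 := acos (r - eps)). set (t2 := acos (r + eps)).
  assert (B1 : 0 <= t1 <= PI) by apply acos_bound. assert (B2 : 0 <= t2 <= PI) by apply acos_bound.
  assert (c1 : cos t1 = r - eps) by (apply cos_acos; lra).
  assert (c2 : cos t2 = r + eps) by (apply cos_acos; lra).
  assert (P1 : is_RInt (ftil n m r) (cos PI) (cos t1) (H PI - H t1)).
  { apply piece; [auto|lra|lra|lra| |intros s hs'; lra|intros y hy; apply Hd; auto].
    intros y hy. assert (cos y <= cos t1) by (apply cos_mono; lra). lra. }
  assert (P2 : is_RInt (ftil n m r) (cos t2) (cos 0) (H t2 - H 0)).
  { apply piece; [auto|lra|lra|lra| |intros s hs'; lra|intros y hy; apply Hd; auto].
    intros y hy. assert (cos t2 <= cos y) by (apply cos_mono; lra). lra. }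
  rewrite cos_PI, c1 in P1. rewrite cos_0, c2 in P2.
  assert (Q1 : is_RInt f (-1) (r - eps) (H PI - H t1)).
  { apply is_RInt_ext with (ftil n m r); auto.
    rewrite Rmin_left, Rmax_right by lra. intros x hx. apply Ef; lra. }
  assert (Q2 : is_RInt f (r + eps) 1 (H t2 - H 0)).
  { apply is_RInt_ext with (ftil n m r); auto.
    rewrite Rmin_left, Rmax_right by lra. intros x hx. apply Ef; lra. }
  split. eexists; exact Q1. split. eexists; exact Q2.
  rewrite (is_RInt_unique (V := R_CompleteNormedModule) _ _ _ _ Q1).
  rewrite (is_RInt_unique (V := R_CompleteNormedModule) _ _ _ _ Q2).
  rewrite (Hdec t1) by lra. rewrite (Hdec t2) by lra. rewrite c1, c2.
  replace ((r - eps - r) ^ 2) with ((r + eps - r) ^ 2) by ring.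
  rewrite <- Hval. ring. }
split.
- exists d. split; auto. intros eps he. destruct (KEY eps he) as [K1 [K2 _]]. auto.
- apply filterlim_ext_loc with (fun eps => v + S (acos (r + eps)) - S (acos (r - eps))).
  + exists (mkposreal d hd). intros y hy hy0.
    change (Rabs (y - 0) < d) in hy. rewrite Rminus_0_r in hy. apply Rabs_def2 in hy.
    destruct (KEY y ltac:(lra)) as [_ [_ K3]]. symmetry. exact K3.
  + apply (filterlim_filter_le_1 (F := locally 0)). apply filter_le_within.
    assert (CT : continuity_pt (fun eps => v + S (acos (r + eps)) - S (acos (r - eps))) 0).
    2: { apply continuity_pt_filterlim in CT. cbv beta in CT.
         rewrite Rplus_0_r, Rminus_0_r in CT. replace (v + S (acos r) - S (acos r)) with v in CT by ring. exact CT. }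
    assert (CA : forall u, -1 < u < 1 -> continuity_pt acos u).
    { intros u hu. apply derivable_continuous_pt. apply derivable_pt_acos. auto. }
    assert (CS : continuity_pt S (acos r)) by (apply continuity_pt_filterlim; auto).
    apply continuity_pt_minus. apply continuity_pt_plus. apply continuity_pt_const. intros ? ?; auto.
    * apply (continuity_pt_comp (fun e => acos (r + e)) S).
      apply (continuity_pt_comp (fun e => r + e) acos).
      apply continuity_pt_plus. apply continuity_pt_const. intros ? ?; auto. apply continuity_pt_id.
      apply CA. lra. rewrite Rplus_0_r. auto.
    * apply (continuity_pt_comp (fun e => acos (r - e)) S).
      apply (continuity_pt_comp (fun e => r - e) acos).
      apply continuity_pt_minus. apply continuity_pt_const. intros ? ?; auto. apply continuity_pt_id.
      apply CA. lra. rewrite Rminus_0_r. auto.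
Qed.
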